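(* Let $(a_n)_{n\ge 0}$ and $(b_n)_{n\ge 0}$ be two sequences of nonnegative real numbers, and let $\alpha_0,\beta\in(0,1)$ be such that for every $\alpha\in(0,\alpha_0)$ the inequality $$a_{n+1}+b_{n+1}\le (1-2\alpha)a_n+\alpha a_{n-1}+\beta b_n$$ holds for all $n\ge 1$. Then there exist $\gamma\in(0,1)$ and $M>0$ such that $a_n\le \gamma^n M$ for every $n>0$. *)

(* Defs.v *)
From Stdlib Require Import Reals.

(* Main.v *)
Require Import Defs.
From Stdlib Require Import Reals Lra Lia.
Open Scope R_scope.

Theorem lemma2p8 (a b : nat -> R) (alpha0 beta : R) :
  (forall n, 0 <= a n) ->
  (forall n, 0 <= b n) ->
  0 < alpha0 < 1 ->
  0 < beta < 1 ->
  (forall alpha, 0 < alpha < alpha0 ->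
     forall n : nat, (1 <= n)%nat ->
       a (S n) + b (S n) <= (1 - 2 * alpha) * a n + alpha * a (n - 1)%nat + beta * b n) ->
  exists gamma M : R, 0 < gamma < 1 /\ 0 < M /\
    forall n : nat, (0 < n)%nat -> a n <= gamma ^ n * M.
Proof.
  intros Ha Hb H0 Hbeta H.
  set (al := alpha0 / 2).
  set (k := 3 * al / 2).
  set (g := Rmax beta (1 - al / 2)).
  assert (Hg1 : beta <= g) by apply Rmax_l.
  assert (Hg2 : 1 - al / 2 <= g) by apply Rmax_r.
  assert (Hal : 0 < al < alpha0) by (unfold al; lra).
  assert (Hg : 0 < g < 1).
  { split; [lra|]. unfold g; apply Rmax_lub_lt; unfold al in *; lra. }
  assert (Hk : 0 <= k) by (unfold k; lra).
  set (V := fun n => a n + b n + k * a (n - 1)%nat).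
  assert (HV : forall m, V (S m) <= g ^ m * V 1%nat).
  { induction m as [|m IH].
    - simpl; lra.
    - assert (Hs : V (S (S m)) <= g * V (S m)).
      { unfold V. replace (S (S m) - 1)%nat with (S m) by lia.
        replace (S m - 1)%nat with m by lia.
        pose proof (H al Hal (S m) ltac:(lia)) as Hn.
        replace (S m - 1)%nat with m in Hn by lia.
        assert (A1 : (1 - al/2) * a (S m) <= g * a (S m))
          by (apply Rmult_le_compat_r; [apply Ha|lra]).
        assert (A2 : al * a m <= g * k * a m).
        { apply Rmult_le_compat_r; [apply Ha|]. unfold k, al in *. nra. }
        assert (A3 : beta * b (S m) <= g * b (S m))
          by (apply Rmult_le_compat_r; [apply Hb|lra]).
        assert (E : k * a (S m) = 3/2 * (al * a (S m))) by (unfold k; lra).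
        assert (E3 : (1 - al/2) * a (S m) = a (S m) - al/2 * a (S m)) by ring.
        assert (E4 : (1 - 2*al) * a (S m) = a (S m) - 2 * (al * a (S m))) by ring.
        rewrite Rmult_plus_distr_l, Rmult_plus_distr_l, <- Rmult_assoc.
        lra. }
      simpl. pose proof (pow_le g m ltac:(lra)). nra. }
  assert (HV1 : 0 <= V 1%nat).
  { unfold V; pose proof (Ha 1%nat); pose proof (Hb 1%nat).
    pose proof (Rmult_le_pos _ _ Hk (Ha (1-1)%nat)). lra. }
  exists g, (V 1%nat / g + 1). split; [exact Hg|]. split.
  { assert (0 <= V 1%nat / g) by (unfold Rdiv; apply Rmult_le_pos; [lra | apply Rlt_le, Rinv_0_lt_compat; lra]). lra. }
  intros n Hn. destruct n as [|m]; [lia|].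
  assert (a (S m) <= V (S m)).
  { unfold V. pose proof (Hb (S m)).
    pose proof (Rmult_le_pos _ _ Hk (Ha (S m - 1)%nat)). lra. }
  pose proof (HV m). pose proof (pow_le g m ltac:(lra)).
  simpl. replace (g * g ^ m * (V 1%nat / g + 1)) with (g ^ m * V 1%nat + g * g ^ m)
    by (field; lra).
  nra.
Qed.
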